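(* Let $G$ be the $m\times n$ square lattice graph $P_m\times P_n$ with $m,n>2$ and $\{m,n\}\notin\{\{3,3\},\{3,5\},\{4,4\}\}$. Then $T_1(G)=4$.
   Context: $P_m\times P_n$ is the Cartesian product of paths on $m$ and $n$ vertices. Fix a set $\Sigma$ of symbols (bond-edge types) and a disjoint copy $\hat\Sigma=\{\hat a:a\in\Sigma\}$ with $\hat{\hat a}=a$; elements of $\Sigma\cup\hat\Sigma$ are cohesive-end types. A tile is a finite multiset of cohesive-end types. A pot is a finite set $P$ of tiles such that whenever $x$ occurs in a tile of $P$, $\hat x$ occurs in some tile of $P$; $\#P$ is its number of tiles. Graphs are finite, loops and multiple edges allowed. An assembly design of a graph $H$ labels the half-edges of $H$ by cohesive-end types so that the two half-edges of each edge receive complementary labels $x,\hat x$; $t_v$ is the multiset of labels at $v$, $P_\lambda(H)=\{t_v\}$, and $P$ realizes $H$ ($H\in\mathcal{O}(P)$) if some assembly design $\lambda$ has $P_\lambda(H)\subseteq P$. $T_1(G)=\min\{\#P: G\in\mathcal{O}(P)\}$. *)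

(* Defs.v *)
From mathcomp Require Import all_boot.
From mathcomp Require Import finmap multiset.
Set Implicit Arguments. Unset Strict Implicit. Unset Printing Implicit Defensive.

Local Open Scope fset_scope.
Local Open Scope mset_scope.
Local Open Scope nat_scope.

(* Bond-edge types Sigma := nat (a countably infinite supply of symbols).
   A cohesive-end type is a pair (a, b): b = false means a, b = true means hat a. *)
Definition cet := (nat * bool)%type.
Definition hat (x : cet) : cet := (x.1, ~~ x.2).

Notation tile := {mset cet}.

Definition is_pot (P : {fset tile}) : Prop :=
  forall t : tile, t \in P -> forall x : cet, x \in t -> exists2 t' : tile, t' \in P & hat x \in t'.

(* Graphs here are simple graphs: a symmetric irreflexive relation on a finType.
   Half-edges are the ordered pairs (v,u) with e v u (the half of edge {u,v} at v). *)
Definition simple_graph (T : finType) (e : rel T) : Prop :=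
  irreflexive e /\ symmetric e.

Definition assembly_design (T : finType) (e : rel T) (lam : T -> T -> cet) : Prop :=
  forall u v, e u v -> lam v u = hat (lam u v).

Definition tile_at (T : finType) (e : rel T) (lam : T -> T -> cet) (v : T) : tile :=
  seq_mset [seq lam v u | u <- enum T & e v u].

Definition realizes (T : finType) (e : rel T) (P : {fset tile}) : Prop :=
  exists lam, assembly_design e lam /\ forall v, tile_at e lam v \in P.

Definition T1_eq (T : finType) (e : rel T) (k : nat) : Prop :=
  (exists P, [/\ is_pot P, realizes e P & #|` P| = k]) /\
  (forall P, is_pot P -> realizes e P -> k <= #|` P|).

Definition path_adj n (i j : 'I_n) : bool := (i.+1 == j :> nat) || (j.+1 == i :> nat).

Definition grid_adj m n : rel ('I_m * 'I_n) :=
  fun x y => ((x.1 == y.1) && path_adj x.2 y.2) || ((x.2 == y.2) && path_adj x.1 y.1).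

(* Main.v *)
Require Import Defs.
From mathcomp Require Import all_boot.
From mathcomp Require Import finmap multiset.
From mathcomp Require Import zify.
From Stdlib Require NArith.
Set Implicit Arguments. Unset Strict Implicit. Unset Printing Implicit Defensive.

Definition cnt (l : seq cet) (x : cet) := count_mem x l.

Definition v6 := (nat * nat * nat * nat * nat * nat)%type.
Definition V6 a b c d e f : v6 := (a,b,c,d,e,f).

Definition st := ((nat * nat * nat) * bool * bool)%type.
Definition st_of (v : v6) : st :=
  let: (a,b,c,d,e,f) := v in ((a+b, c+d, e+f), (0 < c) && (0 < d), (0 < e) && (0 < f)).
Definition sadd (r g : st) : st :=
  let: ((x,y,z),h,k) := r in let: ((x',y',z'),h',k') := g in ((x+x',y+y',z+z'), h||h', k||k').
Definition fits (r : st) : bool := let: ((x,y,z),_,_) := r in (x <= 2) && (y <= 3) && (z <= 4).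
Definition R0 : st := ((0,0,0),false,false).
Definition final : st := ((2,3,4),true,true).

Definition allvecs : seq v6 :=
  flatten [seq flatten [seq flatten [seq flatten [seq flatten
   [seq [seq V6 a b c d e f | f <- iota 0 (5 - e)] | e <- iota 0 5] | d <- iota 0 (4 - c)] | c <- iota 0 4]
    | b <- iota 0 (3 - a)] | a <- iota 0 3].

Lemma allvecsP a b c d e f : a + b <= 2 -> c + d <= 3 -> e + f <= 4 ->
  V6 a b c d e f \in allvecs.
Proof.
move=> hab hcd hef.
apply/flatten_mapP; exists a; first by rewrite mem_iota; lia.
apply/flatten_mapP; exists b; first by rewrite mem_iota; lia.
apply/flatten_mapP; exists c; first by rewrite mem_iota; lia.
apply/flatten_mapP; exists d; first by rewrite mem_iota; lia.
apply/flatten_mapP; exists e; first by rewrite mem_iota; lia.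
by apply/map_f; rewrite mem_iota; lia.
Qed.

Definition Gof (good : v6 -> bool) := undup [seq st_of v | v <- allvecs & good v].
Definition step (G R : seq st) :=
  undup (R ++ [seq s <- [seq sadd r g | r <- R, g <- G] | fits s]).
Definition closure G := iter 10 (step G) [:: R0].
Definition check (good : v6 -> bool) :=
  let G := Gof good in let R := closure G in
  [&& R0 \in R, all (fun r => all (fun g => fits (sadd r g) ==> (sadd r g \in R)) G) R
    & final \notin R].

Definition bnd6 (v : v6) := let: (a,b,c,d,e,f) := v in [&& a + b <= 2, c + d <= 3 & e + f <= 4].

Definition stV (V : seq v6) := foldr (fun v r => sadd r (st_of v)) R0 V.

Lemma fits_sadd r g : fits (sadd r g) -> fits r.
Proof. case: r g => [[[[x y] z] h] k1] [[[[x1 y1] z1] h1] k2] /= /andP[/andP[? ?] ?]. apply/andP; split; [apply/andP; split|]; apply: leq_trans (leq_addr _ _) _; eassumption. Qed.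


Lemma closed_sound (G R : seq st) (good : v6 -> bool) V :
  (forall v, bnd6 v -> good v -> st_of v \in G) -> R0 \in R ->
  all (fun r => all (fun g => fits (sadd r g) ==> (sadd r g \in R)) G) R ->
  all good V -> all bnd6 V -> fits (stV V) -> stV V \in R.
Proof.
move=> hG h0 hcl; elim: V => [|v V IH] //= /andP[gv gV] /andP[bv bV] hf.
have hV := IH gV bV (fits_sadd hf).
have hg := hG v bv gv.
move: (allP hcl _ hV) => /allP /(_ _ hg) /implyP; exact.
Qed.

Lemma Gof_mem (good : v6 -> bool) v : bnd6 v -> good v -> st_of v \in Gof good.
Proof.
move=> bv gv; rewrite /Gof mem_undup; apply/map_f; rewrite mem_filter gv /=.
by case: v bv {gv} => [[[[[a b] c] d] e] f] /and3P[? ? ?]; apply: allvecsP.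
Qed.

Lemma check_final (good : v6 -> bool) V : check good -> all good V -> all bnd6 V -> stV V <> final.
Proof.
rewrite /check; set R := closure _; move=> /and3P[h0 hcl hfin] hg hb he.
have := closed_sound (@Gof_mem good) h0 hcl hg hb; rewrite he => /(_ isT) hin.
by rewrite hin in hfin.
Qed.

Definition s2 (v : v6) := let: (a,b,c,d,e,f) := v in a + b.
Definition s3 (v : v6) := let: (a,b,c,d,e,f) := v in c + d.
Definition s4 (v : v6) := let: (a,b,c,d,e,f) := v in e + f.
Definition F4p (v : v6) := let: (a,b,c,d,e,f) := v in (0 < c) && (0 < d).
Definition F3p (v : v6) := let: (a,b,c,d,e,f) := v in (0 < e) && (0 < f).

Lemma stV_sum V : stV V = ((\sum_(v <- V) s2 v, \sum_(v <- V) s3 v, \sum_(v <- V) s4 v),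
   has F4p V, has F3p V).
Proof.
elim: V => [|v V IH]; first by rewrite !big_nil.
rewrite /= IH !big_cons; case: v => [[[[[a b] c] d] e] f] /=.
by rewrite (addnC (a+b)) (addnC (c+d)) (addnC (e+f)) (orbC ((0<c)&&(0<d))) (orbC ((0<e)&&(0<f))).
Qed.

Lemma sum_even (V : seq v6) (F : v6 -> nat) : all (fun v => ~~ odd (F v)) V -> ~~ odd (\sum_(v <- V) F v).
Proof.
elim: V => [|v V IH]; first by rewrite big_nil.
by rewrite big_cons /= oddD => /andP[/negbTE -> /IH /negbTE ->].
Qed.

Definition parok (good : v6 -> bool) :=
  all (fun v => good v ==> ~~ odd (s3 v)) allvecs || all (fun v => good v ==> ~~ odd (s3 v + s2 v)) allvecs.
Definition check2 (good : v6 -> bool) := parok good || check good.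

Lemma check2_final (good : v6 -> bool) V : check2 good -> all good V -> all bnd6 V -> stV V <> final.
Proof.
case/orP; last exact: check_final.
move=> hp hg hb; rewrite stV_sum => -[e2 e3 _ _ _].
have inA : forall v, v \in V -> good v /\ v \in allvecs.
  move=> v hv; split; first exact: (allP hg).
  by have := allP hb _ hv; case: v hv => [[[[[a b] c] d] e] f] _ /and3P[? ? ?]; apply: allvecsP.
case/orP: hp => /allP hp.
  have : ~~ odd (\sum_(v <- V) s3 v).
    apply: sum_even; apply/allP => v hv; have [g1 g2] := inA v hv; exact: (implyP (hp v g2) g1).
  by rewrite e3.
have : ~~ odd (\sum_(v <- V) (s3 v + s2 v)).
  apply: sum_even; apply/allP => v hv; have [g1 g2] := inA v hv; exact: (implyP (hp v g2) g1).
by rewrite big_split /= e3 e2.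
Qed.

Definition F1b (v : v6) := let: (a,b,c,d,e,f) := v in ((a == 0) || (0 < d)) && ((b == 0) || (0 < c)).
Definition F7bad (v : v6) := let: (a,b,c,d,e,f) := v in
  [&& a == 2, c == 2 & d == 1] || [&& b == 2, d == 2 & c == 1].
Definition eqN (p q : nat) (v : v6) := let: (a,b,c,d,e,f) := v in
  let P := BinNat.N.of_nat p in let Q := BinNat.N.of_nat q in
  BinNat.N.eqb (BinNat.N.add (BinNat.N.add (BinNat.N.mul (BinNat.N.of_nat 4) (BinNat.N.of_nat a)) (BinNat.N.mul (BinNat.N.mul (BinNat.N.of_nat 2) (BinNat.N.add P Q)) (BinNat.N.of_nat c))) (BinNat.N.mul (BinNat.N.mul P Q) (BinNat.N.of_nat e)))
        (BinNat.N.add (BinNat.N.add (BinNat.N.mul (BinNat.N.of_nat 4) (BinNat.N.of_nat b)) (BinNat.N.mul (BinNat.N.mul (BinNat.N.of_nat 2) (BinNat.N.add P Q)) (BinNat.N.of_nat d))) (BinNat.N.mul (BinNat.N.mul P Q) (BinNat.N.of_nat f))).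
Definition goodF p q v := [&& F1b v, eqN p q v & ~~ (((p == 2) || (q == 2)) && F7bad v)].
Definition goodL p (v : v6) := let: (a,b,c,d,e,f) := v in
  [&& F1b v, 2*c + p*e == 2*d + p*f, 4*a + 2*p*c == 4*b + 2*p*d & ~~ ((p == 2) && F7bad v)].
Definition goodH (v : v6) := let: (a,b,c,d,e,f) := v in [&& F1b v, a == b, c == d & e == f].
Definition region := flatten [seq [seq (p,q) | q <- iota p (9 + 5*p)] | p <- iota 1 12].
Definition exc (pq : nat * nat) := pq \in [:: (1,1); (1,3); (2,2)].

Lemma huge_ok : check2 goodH. Proof. vm_cast_no_check (erefl true). Qed.
Lemma large_ok : all (fun p => check2 (goodL p)) (iota 1 12). Proof. vm_cast_no_check (erefl true). Qed.
Lemma fin_ok : all (fun pq => exc pq || check2 (goodF pq.1 pq.2)) region. Proof. vm_cast_no_check (erefl true). Qed.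

Definition vec_of (l2 l3 l4 : seq cet) (k : nat) : v6 :=
  (cnt l2 (k,false), cnt l2 (k,true), cnt l3 (k,false), cnt l3 (k,true), cnt l4 (k,false), cnt l4 (k,true)).

Lemma cnt_cons y l x : cnt (y :: l) x = (y == x) + cnt l x.
Proof. by []. Qed.

Lemma cnt_pair_sum (y : cet) k : ((y == (k,false)) + (y == (k,true)) = (k == y.1))%N.
Proof. by case: y => k' [] /=; rewrite !xpair_eqE /= ?andbT ?andbF ?addn0 // eq_sym. Qed.

Lemma sum_sym (U : seq nat) (l : seq cet) : uniq U -> {subset [seq x.1 | x <- l] <= U} ->
  \sum_(k <- U) (cnt l (k,false) + cnt l (k,true)) = size l.
Proof.
move=> uU; elim: l => [|y l IH] hsub.
  by rewrite big1_seq.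
rewrite (eq_bigr (fun k => (k == y.1) + (cnt l (k,false) + cnt l (k,true)))); last first.
  by move=> k _; rewrite !cnt_cons addnACA cnt_pair_sum.
rewrite big_split /= IH; last by move=> z hz; apply: hsub; rewrite inE hz orbT.
have yU : y.1 \in U by apply: hsub; rewrite inE eqxx.
rewrite (eq_bigr (fun i => if i == y.1 then 1 else 0)); last by move=> i _; case: (i == y.1).
rewrite -big_mkcond sum1_count /= (count_uniq_mem _ uU) yU.
by rewrite add1n.
Qed.

Lemma cnt2_le l k : cnt l (k,false) + cnt l (k,true) <= size l.
Proof.
elim: l => [|y l IH] //; rewrite !cnt_cons addnACA cnt_pair_sum /=.
by case: (k == y.1); rewrite ?add0n ?add1n ?ltnS ?IH // (leq_trans IH).
Qed.



Lemma hatK x : hat (hat x) = x. Proof. by case: x => k []. Qed.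

Lemma cnt_gt0 l x : (0 < cnt l x) = (x \in l).
Proof. by rewrite /cnt -has_count has_pred1. Qed.

Lemma eqN_nat p q a b c d e f : 4*a + 2*(p+q)*c + p*q*e = 4*b + 2*(p+q)*d + p*q*f ->
  eqN p q (a,b,c,d,e,f).
Proof.
rewrite /eqN => H; apply/BinNat.N.eqb_eq; nia.
Qed.

Lemma L1 (p q a b c d e f : nat) : a <= 2 -> b <= 2 -> c <= 3 -> d <= 3 -> e <= 4 -> f <= 4 -> 8 + 6*p < q ->
  4*a + 2*(p+q)*c + p*q*e = 4*b + 2*(p+q)*d + p*q*f ->
  2*c + p*e = 2*d + p*f /\ 4*a + 2*p*c = 4*b + 2*p*d.
Proof.
move=> *.
have H : 2*c + p*e = 2*d + p*f.
  have [H|H|H] := ltngtP (2*c + p*e) (2*d + p*f); last by [].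
  - have : q * (2*c+p*e) + q <= q*(2*d+p*f) by nia. nia.
  - have : q * (2*d+p*f) + q <= q*(2*c+p*e) by nia. nia.
split=> //. nia.
Qed.

Lemma L2 (p q a b c d e f : nat) : a <= 2 -> b <= 2 -> c <= 3 -> d <= 3 -> e <= 4 -> f <= 4 -> 12 < p -> p <= q ->
  4*a + 2*(p+q)*c + p*q*e = 4*b + 2*(p+q)*d + p*q*f ->
  [/\ a = b, c = d & e = f].
Proof.
move=> *.
have Hpq : 8 + 6*(p+q) < p*q by nia.
have H : e = f.
  have [H|H|H] := ltngtP e f; last by [].
  - have : p*q*e + p*q <= p*q*f by nia. nia.
  - have : p*q*f + p*q <= p*q*e by nia. nia.
subst f.
have H : c = d.
  have [H|H|H] := ltngtP c d; last by [].
  - have : 2*(p+q)*c + 2*(p+q) <= 2*(p+q)*d by nia. nia.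
  - have : 2*(p+q)*d + 2*(p+q) <= 2*(p+q)*c by nia. nia.
subst d. split=> //. nia.
Qed.

Lemma core_pq (p q : nat) (l2 l3 l4 : seq cet) :
  0 < p -> p <= q -> ~~ exc (p,q) ->
  size l2 = 2 -> size l3 = 3 -> size l4 = 4 ->
  (forall x, 4 * cnt l2 x + 2*(p+q)*cnt l3 x + p*q*cnt l4 x =
             4 * cnt l2 (hat x) + 2*(p+q)*cnt l3 (hat x) + p*q*cnt l4 (hat x)) ->
  (forall x, x \in l2 -> hat x \in l3) ->
  (exists x, x \in l4 /\ hat x \in l4) ->
  (exists x, x \in l3 /\ hat x \in l3) ->
  ((p == 2) || (q == 2) -> forall a, ~ [/\ cnt l2 a = 2, cnt l3 a = 2 & cnt l3 (hat a) = 1]) ->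
  False.
Proof.
move=> hp hpq hexc h2 h3 h4 hbal hF1 [x3 [x3a x3b]] [x4 [x4a x4b]] hF7.
set U := undup [seq x.1 | x <- l2 ++ l3 ++ l4].
set V := map (vec_of l2 l3 l4) U.
have uU : uniq U by apply: undup_uniq.
have subU : forall l, {subset l <= l2 ++ l3 ++ l4} -> {subset [seq x.1 | x <- l] <= U}.
  move=> l hl y /mapP[z hz ->]; rewrite mem_undup; apply/map_f; exact: hl.
have HV : stV V = final.
  rewrite stV_sum /V !big_map /=.
  rewrite (sum_sym uU (subU l2 _)); last by move=> z hz; rewrite mem_cat hz.
  rewrite (sum_sym uU (subU l3 _)); last by move=> z hz; rewrite !mem_cat hz orbT.
  rewrite (sum_sym uU (subU l4 _)); last by move=> z hz; rewrite !mem_cat hz !orbT.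
  rewrite h2 h3 h4 /final; congr (_,_,_).
  - apply/hasP; exists (vec_of l2 l3 l4 x4.1).
      apply/map_f; rewrite mem_undup; apply/map_f; by rewrite !mem_cat x4a orbT.
    rewrite /= !cnt_gt0; case: x4 x4a x4b => k [] /= hA hB; by rewrite hA hB.
  - apply/hasP; exists (vec_of l2 l3 l4 x3.1).
      apply/map_f; rewrite mem_undup; apply/map_f; by rewrite !mem_cat x3a !orbT.
    rewrite /= !cnt_gt0; case: x3 x3a x3b => k [] /= hA hB; by rewrite hA hB.
have hb : all bnd6 V.
  apply/allP => v /mapP[k _ ->] /=.
  apply/and3P; split; [rewrite -h2 | rewrite -h3 | rewrite -h4]; exact: cnt2_le.
have hF1b : forall k, F1b (vec_of l2 l3 l4 k).
  move=> k /=; apply/andP; split; apply/orP.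
    case: (posnP (cnt l2 (k,false))) => [_|hpos]; [by left|right].
    by rewrite cnt_gt0; apply: (hF1 (k,false)); rewrite -cnt_gt0.
  case: (posnP (cnt l2 (k,true))) => [_|hpos]; [by left|right].
  by rewrite cnt_gt0; apply: (hF1 (k,true)); rewrite -cnt_gt0.
have hEq : forall k, 4 * cnt l2 (k,false) + 2*(p+q)*cnt l3 (k,false) + p*q*cnt l4 (k,false) =
             4 * cnt l2 (k,true) + 2*(p+q)*cnt l3 (k,true) + p*q*cnt l4 (k,true).
  by move=> k; rewrite (hbal (k,false)).
have hF7b : forall k, (p == 2) || (q == 2) -> ~~ F7bad (vec_of l2 l3 l4 k).
  move=> k h27; apply/negP => /orP[/and3P[/eqP ha /eqP hc /eqP hd]|/and3P[/eqP ha /eqP hc /eqP hd]].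
    by apply: (hF7 h27 (k,false)).
  by apply: (hF7 h27 (k,true)).
have hbk : forall k, cnt l2 (k,false) <= 2 /\ cnt l2 (k,true) <= 2 /\ cnt l3 (k,false) <= 3 /\
    cnt l3 (k,true) <= 3 /\ cnt l4 (k,false) <= 4 /\ cnt l4 (k,true) <= 4.
  move=> k; have := cnt2_le l2 k; have := cnt2_le l3 k; have := cnt2_le l4 k.
  rewrite h2 h3 h4; lia.
have [hp12|hp12] := leqP p 12.
  have [hq|hq] := leqP q (8 + 6*p).
    have hreg : (p,q) \in region.
      apply/flatten_mapP; exists p; first by rewrite mem_iota; lia.
      apply/map_f; rewrite mem_iota; lia.
    have := allP fin_ok _ hreg; rewrite /= (negbTE hexc) /= => hc.
    apply: (check2_final hc _ hb HV).
    apply/allP => v /mapP[k _ ->]; apply/and3P; split; first exact: hF1b.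
      exact: eqN_nat (hEq k).
    by case: ((p == 2) || (q == 2)) (hF7b k) => // ->.
  have hpin : p \in iota 1 12 by rewrite mem_iota; lia.
  have hc := allP large_ok _ hpin.
  apply: (check2_final hc _ hb HV).
  apply/allP => v /mapP[k _ ->].
  have [B1 [B2 [B3 [B4 [B5 B6]]]]] := hbk k.
  have [E1 E2] := L1 B1 B2 B3 B4 B5 B6 hq (hEq k).
  apply/and4P; split; first exact: hF1b.
  - by apply/eqP; exact: E1.
  - by apply/eqP; exact: E2.
  have hq2 : (q == 2) = false by apply/negbTE; lia.
  by have := hF7b k; rewrite hq2 orbF; case: (p == 2) => // ->.
apply: (check2_final huge_ok _ hb HV).
apply/allP => v /mapP[k _ ->].
have [B1 [B2 [B3 [B4 [B5 B6]]]]] := hbk k.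
have [E1 E2 E3] := L2 B1 B2 B3 B4 B5 B6 hp12 hpq (hEq k).
apply/and4P; split; first exact: hF1b.
- by apply/eqP; exact: E1.
- by apply/eqP; exact: E2.
- by apply/eqP; exact: E3.
Qed.

Lemma core_all (p q : nat) (l2 l3 l4 : seq cet) :
  0 < p -> 0 < q -> ~~ exc (p,q) -> ~~ exc (q,p) ->
  size l2 = 2 -> size l3 = 3 -> size l4 = 4 ->
  (forall x, 4 * cnt l2 x + 2*(p+q)*cnt l3 x + p*q*cnt l4 x =
             4 * cnt l2 (hat x) + 2*(p+q)*cnt l3 (hat x) + p*q*cnt l4 (hat x)) ->
  (forall x, x \in l2 -> hat x \in l3) ->
  (exists x, x \in l4 /\ hat x \in l4) ->
  (exists x, x \in l3 /\ hat x \in l3) ->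
  ((p == 2) || (q == 2) -> forall a, ~ [/\ cnt l2 a = 2, cnt l3 a = 2 & cnt l3 (hat a) = 1]) ->
  False.
Proof.
move=> hp hq e1 e2 h2 h3 h4 hbal hF1 hF3 hF4 hF7.
case: (leqP p q) => hpq.
  exact: (core_pq hp hpq e1 h2 h3 h4 hbal hF1 hF3 hF4 hF7).
apply: (core_pq hq (ltnW hpq) e2 h2 h3 h4 _ hF1 hF3 hF4).
  by move=> x; rewrite (addnC q) (mulnC q); apply: hbal.
by rewrite orbC; apply: hF7.
Qed.

Notation VT m n := (ordinal m.+1 * ordinal n.+1)%type.
Definition adj m n : rel (VT m n) := @grid_adj m.+1 n.+1.
Definition pt {m n : nat} (i j : nat) : VT m n := (inord i, inord j).

Definition nbc (m n i j : nat) : seq (nat * nat) :=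
  (if 0 < i then [:: (i.-1, j)] else [::]) ++ (if i < m then [:: (i.+1, j)] else [::]) ++
  (if 0 < j then [:: (i, j.-1)] else [::]) ++ (if j < n then [:: (i, j.+1)] else [::]).
Definition nbn (m n i j : nat) : seq (VT m n) := [seq pt c.1 c.2 | c <- nbc m n i j].

Lemma pt1 m n i j : i <= m -> ((@pt m n i j).1 : nat) = i.
Proof. by move=> h; rewrite /pt /= inordK. Qed.
Lemma pt2 m n i j : j <= n -> ((@pt m n i j).2 : nat) = j.
Proof. by move=> h; rewrite /pt /= inordK. Qed.
Lemma ptE m n (v : VT m n) : pt v.1 v.2 = v.
Proof. by case: v => x y; rewrite /pt !inord_val. Qed.

Lemma eq_pt m n (u : VT m n) a b : a <= m -> b <= n ->
  (u == pt a b) = ((u.1 == a :> nat) && (u.2 == b :> nat)).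
Proof. by case: u => x y ha hb; rewrite /pt xpair_eqE -!val_eqE /= !inordK. Qed.

Lemma adjE m n (v u : VT m n) : adj v u =
  ((v.1 == u.1 :> nat) && ((v.2.+1 == u.2 :> nat) || (u.2.+1 == v.2 :> nat))) ||
  ((v.2 == u.2 :> nat) && ((v.1.+1 == u.1 :> nat) || (u.1.+1 == v.1 :> nat))).
Proof. by []. Qed.

Lemma adj_sym m n (v u : VT m n) : adj v u = adj u v.
Proof. rewrite !adjE; lia. Qed.

Lemma nbc_all m n i j : i <= m -> j <= n -> all (fun c => (c.1 <= m) && (c.2 <= n)) (nbc m n i j).
Proof. move=> hi hj; rewrite /nbc; do 4 case: ifP => ? /=; lia. Qed.

Lemma nbc_bound m n i j c : i <= m -> j <= n -> c \in nbc m n i j -> c.1 <= m /\ c.2 <= n.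
Proof. by move=> hi hj /(allP (nbc_all hi hj)) /andP. Qed.

Lemma mem_map_pt m n (u : VT m n) (s : seq (nat * nat)) :
  all (fun c => (c.1 <= m) && (c.2 <= n)) s ->
  (u \in [seq pt c.1 c.2 | c <- s]) = ((u.1 : nat, u.2 : nat) \in s).
Proof.
move=> hs; apply/mapP/idP => [[c hc ->]|hu].
  by have /andP[h1 h2] := allP hs _ hc; rewrite pt1 // pt2 //; case: c hc {h1 h2}.
by exists (u.1 : nat, u.2 : nat); rewrite ?ptE.
Qed.

Lemma mem_nbn m n (v u : VT m n) : (u \in nbn m n v.1 v.2) = adj v u.
Proof.
have h1 := ltn_ord v.1; have h2 := ltn_ord v.2; have h3 := ltn_ord u.1; have h4 := ltn_ord u.2.
rewrite /nbn mem_map_pt ?nbc_all // adjE /nbc.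
by do 4 case: ifP => ? /=; rewrite ?mem_cat ?inE ?xpair_eqE; lia.
Qed.

Lemma nbc_uniq m n i j : uniq (nbc m n i j).
Proof. by rewrite /nbc; do 4 case: ifP => ? /=; rewrite ?inE ?xpair_eqE; lia. Qed.

Lemma nbn_uniq m n i j : i <= m -> j <= n -> uniq (nbn m n i j).
Proof.
move=> hi hj; rewrite map_inj_in_uniq ?nbc_uniq //.
move=> [a b] [c d] /(nbc_bound hi hj) /= [ha hb] /(nbc_bound hi hj) /= [hc hd] /= E.
by have := f_equal (fun v : VT m n => (v.1 : nat, v.2 : nat)) E; rewrite /= !pt1 ?pt2.
Qed.

Definition Lof m n (lam : VT m n -> VT m n -> cet) (v : VT m n) :=
  [seq lam v u | u <- enum {: VT m n} & adj v u].

Lemma L_perm m n lam (v : VT m n) :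
  perm_eq (Lof lam v) [seq lam v u | u <- nbn m n v.1 v.2].
Proof.
apply: perm_map; apply: uniq_perm.
- by rewrite filter_uniq ?enum_uniq.
- by apply: nbn_uniq; rewrite -ltnS.
by move=> u; rewrite mem_filter mem_enum andbT mem_nbn.
Qed.

Lemma tileE m n lam (v : VT m n) : tile_at (@adj m n) lam v = seq_mset (Lof lam v).
Proof. by []. Qed.

Lemma Lof_mem m n lam (v u : VT m n) : adj v u -> lam v u \in Lof lam v.
Proof. by move=> h; apply: map_f; rewrite mem_filter h mem_enum. Qed.

Lemma Lof_inv m n lam (v : VT m n) x : x \in Lof lam v -> exists2 u, adj v u & x = lam v u.
Proof. by case/mapP=> u; rewrite mem_filter mem_enum andbT => h ->; exists u. Qed.

Definition deg (m n i j : nat) := (0 < i) + (i < m) + (0 < j) + (j < n).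

Lemma size_Lof m n lam (v : VT m n) : size (Lof lam v) = deg m n v.1 v.2.
Proof.
rewrite (perm_size (L_perm lam v)) size_map size_map /nbc /deg.
by do 4 case: ifP => ? /=; lia.
Qed.

Definition bndv (m n i j : nat) := (i == 0) || (i == m) || (j == 0) || (j == n).
Definition tailn (m n i j a b : nat) :=
  if j == b then (if j == n then a < i else i < a) else (if i == 0 then b < j else j < b).
Definition lamn (m n i j a b : nat) : cet :=
  (if bndv m n i j && bndv m n a b then 0 else 1, ~~ tailn m n i j a b).
Definition lamU m n (v u : VT m n) : cet := lamn m n v.1 v.2 u.1 u.2.

Lemma lamU_design m n : assembly_design (@adj m n) (@lamU m n).
Proof.
move=> u v; rewrite adjE /lamU /lamn /hat /= => H.
rewrite [bndv _ _ v.1 _ && _]andbC negbK; congr pair.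
rewrite /tailn; move: H; do 4 case: ifP => ? /=; lia.
Qed.

Definition tC : tile := seq_mset [:: (0,false); (0,true)].
Definition tS1 : tile := seq_mset [:: (0,false); (0,true); (1,false)].
Definition tS2 : tile := seq_mset [:: (0,false); (0,true); (1,true)].
Definition tI : tile := seq_mset [:: (1,false); (1,false); (1,true); (1,true)].
Definition Pot : {fset tile} := [fset t in [:: tC; tS1; tS2; tI]]%fset.

Lemma in_seq_mset (x : cet) s : (x \in seq_mset s) = (x \in s).
Proof. by rewrite in_mset mset_seqE -has_count has_pred1. Qed.

Lemma card4 (a b c d : tile) : a != b -> a != c -> a != d -> b != c -> b != d -> c != d ->
  #|` [fset t in [:: a; b; c; d]]%fset| = 4.
Proof.
move=> h1 h2 h3 h4 h5 h6; rewrite card_fseq undup_id //= !inE !negb_or.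
by rewrite h1 h2 h3 h4 h5 h6.
Qed.

Lemma mset_ne s t (x : cet) : count_mem x s != count_mem x t -> seq_mset s != seq_mset t.
Proof. by move=> h; apply/eqP => E; move: h; rewrite -!mset_seqE E eqxx. Qed.

Lemma Pot_card : #|` Pot| = 4.
Proof.
rewrite /Pot /tC /tS1 /tS2 /tI; apply: card4.
- by apply: (mset_ne (x := (1,false))).
- by apply: (mset_ne (x := (1,true))).
- by apply: (mset_ne (x := (1,false))).
- by apply: (mset_ne (x := (1,true))).
- by apply: (mset_ne (x := (1,false))).
- by apply: (mset_ne (x := (1,false))).
Qed.

Lemma Pot_mem t : (t \in Pot) = (t \in [:: tC; tS1; tS2; tI]).
Proof. by rewrite /Pot in_fset. Qed.

Lemma mem4 (T : eqType) (a b c d : T) : d \in [:: a; b; c; d].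
Proof. by rewrite !in_cons eqxx !orbT. Qed.

Lemma in4 (T : eqType) (t a b c d : T) : t \in [:: a; b; c; d] -> [\/ t = a, t = b, t = c | t = d].
Proof. rewrite !inE => /or4P[] /eqP ->; [exact: Or41|exact: Or42|exact: Or43|exact: Or44]. Qed.

Lemma Pot_pot : is_pot Pot.
Proof.
have key : forall x : cet, (x.1 == 0) || (x.1 == 1) -> exists2 t' : tile, t' \in Pot & hat x \in t'.
  move=> [k b] /= /orP[/eqP->|/eqP->].
    exists tC; first by rewrite Pot_mem mem_head.
    by rewrite /tC in_seq_mset; case: b.
  exists tI; first by rewrite Pot_mem; exact: (mem4 tC tS1 tS2 tI).
  by rewrite /tI in_seq_mset; case: b.
move=> t; rewrite Pot_mem => /in4 ht x hx; apply: key.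
by move: hx; case: ht => ->; rewrite /tC /tS1 /tS2 /tI in_seq_mset !inE;
  repeat case/orP; move/eqP=> -> .
Qed.

Ltac decb := repeat (match goal with
  | |- context [(?a == ?b :> nat)] =>
      first [ rewrite (_ : (a == b) = true); last by lia
            | rewrite (_ : (a == b) = false); last by lia ]
  | |- context [(?a <= ?b)] =>
      first [ rewrite (_ : (a <= b) = true); last by lia
            | rewrite (_ : (a <= b) = false); last by lia ]
  end; simpl).

Arguments perm_eq : simpl never.

Definition lC : seq cet := [:: (0,false); (0,true)].
Definition lS1 : seq cet := [:: (0,false); (0,true); (1,false)].
Definition lS2 : seq cet := [:: (0,false); (0,true); (1,true)].
Definition lI : seq cet := [:: (1,false); (1,false); (1,true); (1,true)].

Lemma key9 m n i j : 1 < m -> 1 < n -> i <= m -> j <= n ->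
  let X := [seq lamn m n i j c.1 c.2 | c <- nbc m n i j] in
  [\/ perm_eq X lC, perm_eq X lS1, perm_eq X lS2 | perm_eq X lI].
Proof.
move=> hm hn hi hj X; rewrite /X /nbc.
have [->|i0] := eqVneq i 0; [|have [->|im] := eqVneq i m];
(have [->|j0] := eqVneq j 0; [|have [->|jn] := eqVneq j n]);
decb; rewrite /lamn /bndv /tailn; decb; rewrite ?orbT ?orbF ?andbT ?andbF /=; decb.
all: first [ by apply: Or41 | by apply: Or42 | by apply: Or43 | by apply: Or44 | idtac ].
Qed.

Lemma inPot_C : seq_mset lC \in Pot. Proof. by rewrite Pot_mem mem_head. Qed.
Lemma inPot_S1 : seq_mset lS1 \in Pot.
Proof. rewrite Pot_mem; apply: mem_behead; exact: mem_head. Qed.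
Lemma inPot_S2 : seq_mset lS2 \in Pot.
Proof. rewrite Pot_mem; do 2 apply: mem_behead; exact: mem_head. Qed.
Lemma inPot_I : seq_mset lI \in Pot.
Proof. rewrite Pot_mem; exact: (mem4 tC tS1 tS2 tI). Qed.

Lemma tile_in m n (v : VT m n) : 1 < m -> 1 < n -> tile_at (@adj m n) (@lamU m n) v \in Pot.
Proof.
move=> hm hn; rewrite tileE.
have hi : (v.1 : nat) <= m by rewrite -ltnS.
have hj : (v.2 : nat) <= n by rewrite -ltnS.
have E : seq_mset (Lof (@lamU m n) v) = seq_mset [seq lamn m n v.1 v.2 c.1 c.2 | c <- nbc m n v.1 v.2].
  apply/eq_seq_msetP; apply: (perm_trans (L_perm _ _)).
  have -> : [seq lamU v u | u <- nbn m n v.1 v.2] = [seq lamn m n v.1 v.2 c.1 c.2 | c <- nbc m n v.1 v.2].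
    rewrite /nbn -map_comp; apply/eq_in_map => c hc.
    by have [h1 h2] := nbc_bound hi hj hc; rewrite /= /lamU pt1 // pt2.
  exact: perm_refl.
rewrite E; case: (key9 hm hn hi hj) => /eq_seq_msetP ->.
- exact: inPot_C.
- exact: inPot_S1.
- exact: inPot_S2.
- exact: inPot_I.
Qed.

Lemma upper m n : 1 < m -> 1 < n ->
  exists P, [/\ is_pot P, realizes (@adj m n) P & #|` P| = 4].
Proof.
move=> hm hn; exists Pot; split.
- exact: Pot_pot.
- exists (@lamU m n); split; first exact: lamU_design.
  by move=> v; apply: tile_in.
- exact: Pot_card.
Qed.


Lemma count_enum_sum (T : finType) (P : pred T) : count P (enum {: T}) = \sum_(u : T) (P u : nat).
Proof.
rewrite -sum1_count big_enum_cond big_mkcond /=.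
by apply: eq_bigr => u _; case: (P u).
Qed.

Lemma cntL m n lam (v : VT m n) x : cnt (Lof lam v) x = \sum_(u : VT m n) (adj v u && (lam v u == x) : nat).
Proof.
rewrite /cnt /Lof count_map count_filter count_enum_sum.
by apply: eq_bigr => u _ /=; rewrite andbC.
Qed.

Lemma bal m n lam : assembly_design (@adj m n) lam ->
  forall x, \sum_(v : VT m n) cnt (Lof lam v) x = \sum_(v : VT m n) cnt (Lof lam v) (hat x).
Proof.
move=> hd x; under eq_bigr do rewrite cntL; under [RHS]eq_bigr do rewrite cntL.
rewrite exchange_big /=; apply: eq_bigr => u _; apply: eq_bigr => v _.
rewrite adj_sym; case h: (adj u v) => //=.
rewrite (hd _ _ h); congr nat_of_bool; apply/eqP/eqP => [<-|->]; by rewrite hatK.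
Qed.

Lemma sum_ends k (F : nat -> nat) : 0 < k ->
  \sum_(j < k.+1) F ((0 < j) + (j < k)) = 2 * F 1 + (k - 1) * F 2.
Proof.
case: k => [|k] // _.
rewrite big_ord_recl big_ord_recr /=.
rewrite (eq_bigr (fun _ => F 2)); last first.
  by move=> j _; rewrite /bump /= ltnS ltn_ord.
rewrite big_const_ord iter_addn_0 subn1 /= ltnn.
rewrite add0n addn0 [F 2 * k]mulnC; lia.
Qed.

Lemma sum_grid m n (g : nat -> nat) : 0 < m -> 0 < n ->
  \sum_(v : VT m n) g (deg m n v.1 v.2) = 4 * g 2 + 2 * ((m-1) + (n-1)) * g 3 + (m-1)*(n-1) * g 4.
Proof.
move=> hm hn; rewrite -(pair_big xpredT xpredT (fun (i : 'I_m.+1) (j : 'I_n.+1) => g (deg m n i j))) /=.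
rewrite (eq_bigr (fun i : 'I_m.+1 => 2 * g (((0<i)+(i<m)) + 1) + (n-1) * g (((0<i)+(i<m)) + 2))); last first.
  move=> i _; rewrite -(sum_ends (fun t => g ((0<i)+(i<m) + t))) //.
  by apply: eq_bigr => j _; rewrite /deg !addnA.
rewrite (sum_ends (fun s => 2 * g (s + 1) + (n-1) * g (s + 2))) //=.
rewrite (_ : 1 + 1 = 2) // (_ : 1 + 2 = 3) // (_ : 2 + 1 = 3) // (_ : 2 + 2 = 4) //.
set a := g 2; set b := g 3; set c := g 4; set p := m - 1; set q := n - 1. nia.
Qed.

Definition rep m n (d : nat) : VT m n := if d == 2 then pt 0 0 else if d == 3 then pt 1 0 else pt 1 1.

Lemma deg_pt m n a b : a <= m -> b <= n -> deg m n (@pt m n a b).1 (@pt m n a b).2 = deg m n a b.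
Proof. by move=> ha hb; rewrite pt1 // pt2. Qed.

Lemma size_tile m n lam (v : VT m n) : size (seq_mset (Lof lam v)) = deg m n v.1 v.2.
Proof. by rewrite (perm_size (perm_eq_seq_mset _)) size_Lof. Qed.

Lemma three_tiles (P : {fset tile}) (A B C t : tile) : #|` P| <= 3 ->
  A \in P -> B \in P -> C \in P -> t \in P -> size A = 2 -> size B = 3 -> size C = 4 ->
  [\/ t = A, t = B | t = C].
Proof.
move=> hP hA hB hC ht sA sB sC.
have ne : forall u w : tile, size u != size w -> u != w by move=> u w h; apply: contraNneq h => ->.
case: (eqVneq t A) => [->|nA]; first exact: Or31.
case: (eqVneq t B) => [->|nB]; first exact: Or32.
case: (eqVneq t C) => [->|nC]; first exact: Or33.
have : 4 <= #|` P|.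
  have -> : 4 = size [:: t; A; B; C] by [].
  apply: uniq_leq_size.
    rewrite /= !inE !negb_or nA nB nC !ne //; by rewrite ?sA ?sB ?sC.
  by move=> y; rewrite !inE => /or4P[] /eqP ->.
lia.
Qed.

Lemma classify m n lam (P : {fset tile}) : 1 < m -> 1 < n -> #|` P| <= 3 ->
  (forall v, tile_at (@adj m n) lam v \in P) ->
  forall (v : VT m n) x, cnt (Lof lam v) x = cnt (Lof lam (rep m n (deg m n v.1 v.2))) x.
Proof.
move=> hm hn hP hin v x.
have inP : forall w, seq_mset (Lof lam w) \in P by move=> w; rewrite -tileE.
have sA : size (seq_mset (Lof lam (@pt m n 0 0))) = 2 by rewrite size_tile deg_pt //; rewrite /deg; lia.
have sB : size (seq_mset (Lof lam (@pt m n 1 0))) = 3 by rewrite size_tile deg_pt //; rewrite /deg; lia.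
have sC : size (seq_mset (Lof lam (@pt m n 1 1))) = 4 by rewrite size_tile deg_pt //; rewrite /deg; lia.
have st := size_tile lam v.
rewrite /cnt -!mset_seqE.
case: (three_tiles hP (inP _) (inP _) (inP _) (inP v) sA sB sC) => E; rewrite E.
- by have -> : deg m n v.1 v.2 = 2 by rewrite -st E sA.
- by have -> : deg m n v.1 v.2 = 3 by rewrite -st E sB.
- by have -> : deg m n v.1 v.2 = 4 by rewrite -st E sC.
Qed.

Lemma cnt2 m n lam (u c w : VT m n) : adj u c -> adj u w -> c != w -> lam u c = lam u w ->
  2 <= cnt (Lof lam u) (lam u c).
Proof.
move=> hc hw ne E; rewrite cntL (bigD1 c) // (bigD1 w) /=; last by rewrite eq_sym.
by rewrite hc hw E eqxx.
Qed.

Lemma all_eq (l : seq cet) a : cnt l a = size l -> forall y, y \in l -> y = a.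
Proof.
move=> h y hy; have : all (pred1 a) l by rewrite all_count; apply/eqP.
by move/allP/(_ _ hy)/eqP.
Qed.

Lemma cnt_ab_le (l : seq cet) a b : a != b -> cnt l a + cnt l b <= size l.
Proof.
move=> ne; have := count_predUI (pred1 a) (pred1 b) l.
have -> : count (predI (pred1 a) (pred1 b)) l = 0.
  apply/eqP; rewrite -leqn0 leqNgt -has_count; apply/hasP => [[t _ /andP[/eqP ta /eqP tb]]].
  by move: ne; rewrite -ta -tb eqxx.
rewrite addn0 /cnt => <-; exact: count_size.
Qed.

Lemma two_vals (l : seq cet) a b : a != b -> cnt l a + cnt l b = size l -> forall y, y \in l -> y = a \/ y = b.
Proof.
move=> ne; elim: l => [|z l IH] // h y; rewrite inE => /orP[/eqP ->|hy].
  case: (z =P a) => [->|za]; [by left|].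
  case: (z =P b) => [->|zb]; [by right|].
  move: h; rewrite !cnt_cons /=.
  have := cnt_ab_le l ne.
  move: za zb => /eqP/negbTE -> /eqP/negbTE ->; lia.
apply: IH => //; move: h; rewrite !cnt_cons /=.
have := cnt_ab_le l ne.
have : (z == a) + (z == b) <= 1.
  by case: (z =P a) => [->|_]; rewrite ?(negbTE ne) //; case: (z == b).
lia.
Qed.

Lemma hat_neq (a : cet) : a != hat a.
Proof. by case: a => k []; rewrite /hat /= xpair_eqE /= andbF. Qed.

Lemma F7gen m n lam (c u w c' : VT m n) (l3 : seq cet) a :
  assembly_design (@adj m n) lam -> adj c u -> adj u w -> adj w c' -> c != w -> u != c' ->
  (forall y, y \in Lof lam c -> y = a) -> (forall y, y \in Lof lam c' -> y = a) ->
  (forall y, cnt (Lof lam u) y = cnt l3 y) -> (forall y, cnt (Lof lam w) y = cnt l3 y) ->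
  cnt l3 a + cnt l3 (hat a) = size l3 -> cnt l3 (hat a) = 1 -> False.
Proof.
move=> hd hcu huw hwc ncw nuc hc hc' tu tw hs h1.
have hu : lam u c = hat a by rewrite (hd _ _ hcu) (hc _ (Lof_mem _ hcu)).
have hw : lam w c' = hat a.
  have hc'w : adj c' w by rewrite adj_sym.
  by rewrite (hd _ _ hc'w) (hc' _ (Lof_mem _ hc'w)).
have yin : lam u w \in l3 by rewrite -cnt_gt0 -tu cnt_gt0 Lof_mem.
case: (two_vals (hat_neq a) hs yin) => E.
  have : 2 <= cnt (Lof lam w) (lam w u).
    apply: (@cnt2 _ _ lam w u c') => //; first by rewrite adj_sym.
    by rewrite (hd _ _ huw) E hw.
  by rewrite tw (hd _ _ huw) E h1.
have : 2 <= cnt (Lof lam u) (lam u c).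
  apply: (@cnt2 _ _ lam u c w) => //; first by rewrite adj_sym.
  by rewrite hu E.
by rewrite tu hu h1.
Qed.

Lemma adj_pt m n a b c d : a <= m -> b <= n -> c <= m -> d <= n ->
  adj (@pt m n a b) (pt c d) =
  ((a == c) && ((b.+1 == d) || (d.+1 == b))) || ((b == d) && ((a.+1 == c) || (c.+1 == a))).
Proof. by move=> *; rewrite adjE !pt1 ?pt2. Qed.

Lemma neq_pt m n a b c d : a <= m -> b <= n -> c <= m -> d <= n ->
  (@pt m n a b != pt c d) = ~~ ((a == c) && (b == d)).
Proof. by move=> *; rewrite eq_pt // pt1 ?pt2. Qed.

Lemma lower m n (P : {fset tile}) : 1 < m -> 1 < n -> ~~ exc (m-1, n-1) -> ~~ exc (n-1, m-1) ->
  realizes (@adj m n) P -> 4 <= #|` P|.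
Proof.
move=> hm hn e1 e2 [lam [hd hin]].
rewrite leqNgt; apply/negP; rewrite ltnS => hP.
have cl := classify hm hn hP hin.
have big : (2 < m) || (2 < n).
  case: (ltnP 2 m) => //= a; case: (ltnP 2 n) => //= b.
  have m2 : m = 2 by lia.
  have n2 : n = 2 by lia.
  by move: e1; rewrite m2 n2.
pose l2 := Lof lam (@pt m n 0 0).
pose l3 := Lof lam (@pt m n 1 0).
pose l4 := Lof lam (@pt m n 1 1).
have tr2 : forall v : VT m n, deg m n v.1 v.2 = 2 -> forall y, cnt (Lof lam v) y = cnt l2 y.
  by move=> v h y; rewrite cl h.
have tr3 : forall v : VT m n, deg m n v.1 v.2 = 3 -> forall y, cnt (Lof lam v) y = cnt l3 y.
  by move=> v h y; rewrite cl h.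
have tr4 : forall v : VT m n, deg m n v.1 v.2 = 4 -> forall y, cnt (Lof lam v) y = cnt l4 y.
  by move=> v h y; rewrite cl h.
have mem_tr : forall (v : VT m n) y (l : seq cet), (forall z, cnt (Lof lam v) z = cnt l z) ->
    y \in Lof lam v -> y \in l.
  by move=> v y l h; rewrite -!cnt_gt0 h.
have dpt : forall a b, a <= m -> b <= n -> deg m n (@pt m n a b).1 (@pt m n a b).2 = deg m n a b.
  by move=> a b ha hb; rewrite deg_pt.
have E : forall y, \sum_(v : VT m n) cnt (Lof lam v) y =
    4 * cnt l2 y + 2 * ((m-1) + (n-1)) * cnt l3 y + (m-1)*(n-1) * cnt l4 y.
  move=> y; have G := sum_grid (fun d => cnt (Lof lam (rep m n d)) y) (ltnW hm) (ltnW hn).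
  rewrite /= in G; rewrite (eq_bigr _ (fun v _ => cl v y)) G.
  by [].
apply: (@core_all (m-1) (n-1) l2 l3 l4).
- lia.
- lia.
- exact: e1.
- exact: e2.
- by rewrite size_Lof dpt // /deg; lia.
- by rewrite size_Lof dpt // /deg; lia.
- by rewrite size_Lof dpt // /deg; lia.
- by move=> x; rewrite -!E; exact: bal hd x.
- move=> x /Lof_inv [u hu ->]; rewrite -(hd _ _ hu).
  apply: (mem_tr u); last by apply: Lof_mem; rewrite adj_sym.
  apply: tr3; move: hu; rewrite adjE pt1 // pt2 // /deg.
  have := ltn_ord u.1; have := ltn_ord u.2; lia.
- case/orP: big => hb.
  + have ha : adj (@pt m n 1 1) (pt 2 1) by rewrite adj_pt //; lia.
    exists (lam (pt 1 1) (pt 2 1)); split; first exact: Lof_mem.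
    rewrite -(hd _ _ ha); apply: (mem_tr (pt 2 1)); last by apply: Lof_mem; rewrite adj_sym.
    by apply: tr4; rewrite dpt // /deg; lia.
  + have ha : adj (@pt m n 1 1) (pt 1 2) by rewrite adj_pt //; lia.
    exists (lam (pt 1 1) (pt 1 2)); split; first exact: Lof_mem.
    rewrite -(hd _ _ ha); apply: (mem_tr (pt 1 2)); last by apply: Lof_mem; rewrite adj_sym.
    by apply: tr4; rewrite dpt // /deg; lia.
- case/orP: big => hb.
  + have ha : adj (@pt m n 1 0) (pt 2 0) by rewrite adj_pt //; lia.
    exists (lam (pt 1 0) (pt 2 0)); split; first exact: Lof_mem.
    rewrite -(hd _ _ ha); apply: (mem_tr (pt 2 0)); last by apply: Lof_mem; rewrite adj_sym.
    by apply: tr3; rewrite dpt // /deg; lia.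
  + have ha : adj (@pt m n 0 1) (pt 0 2) by rewrite adj_pt //; lia.
    exists (lam (pt 0 1) (pt 0 2)); split.
      apply: (mem_tr (pt 0 1)); last exact: Lof_mem.
      by apply: tr3; rewrite dpt // /deg; lia.
    rewrite -(hd _ _ ha); apply: (mem_tr (pt 0 2)); last by apply: Lof_mem; rewrite adj_sym.
    by apply: tr3; rewrite dpt // /deg; lia.
- move=> h27 a [c2 c3 c3h].
  have s2 : size l2 = 2 by rewrite size_Lof dpt // /deg; lia.
  have hs : cnt l3 a + cnt l3 (hat a) = size l3 by rewrite c3 c3h size_Lof dpt // /deg; lia.
  have all2 : forall y, y \in l2 -> y = a by apply: all_eq; rewrite c2 s2.
  case/orP: h27 => /eqP h.
  + have m3 : m = 3 by lia.
    apply: (@F7gen m n lam (pt 0 0) (pt 1 0) (pt 2 0) (pt 3 0) l3 a hd) => //.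
    * by rewrite adj_pt //; lia.
    * by rewrite adj_pt //; lia.
    * by rewrite adj_pt //; lia.
    * by rewrite neq_pt //; lia.
    * by rewrite neq_pt //; lia.
    * move=> y hy; apply: all2; apply: (mem_tr (pt 3 0)) => //.
      by apply: tr2; rewrite dpt // /deg; lia.
    * by apply: tr3; rewrite dpt // /deg; lia.
  + have n3 : n = 3 by lia.
    apply: (@F7gen m n lam (pt 0 0) (pt 0 1) (pt 0 2) (pt 0 3) l3 a hd) => //.
    * by rewrite adj_pt //; lia.
    * by rewrite adj_pt //; lia.
    * by rewrite adj_pt //; lia.
    * by rewrite neq_pt //; lia.
    * by rewrite neq_pt //; lia.
    * move=> y hy; apply: all2; apply: (mem_tr (pt 0 3)) => //.
      by apply: tr2; rewrite dpt // /deg; lia.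
    * by apply: tr3; rewrite dpt // /deg; lia.
    * by apply: tr3; rewrite dpt // /deg; lia.
Qed.

Theorem proposition5 (m n : nat) :
  2 < m -> 2 < n ->
  ~ ((m == 3) && (n == 3)) -> ~ ((m == 3) && (n == 5)) -> ~ ((m == 5) && (n == 3)) ->
  ~ ((m == 4) && (n == 4)) ->
  T1_eq (@grid_adj m n) 4.
Proof.
case: m => [|m] // hm; case: n => [|n] // hn h33 h35 h53 h44.
split.
- exact: (@upper m n).
- move=> P _ hr; apply: (@lower m n P) => //.
  + rewrite /exc !inE; apply/negP; case/or3P => /eqP [] ha hb.
    * by apply: h33; apply/andP; split; apply/eqP; lia.
    * by apply: h35; apply/andP; split; apply/eqP; lia.
    * by apply: h44; apply/andP; split; apply/eqP; lia.
  + rewrite /exc !inE; apply/negP; case/or3P => /eqP [] ha hb.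
    * by apply: h33; apply/andP; split; apply/eqP; lia.
    * by apply: h53; apply/andP; split; apply/eqP; lia.
    * by apply: h44; apply/andP; split; apply/eqP; lia.
Qed.
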